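(* The family of operators $(T_u)_{u\ge 0}$ defined on $L$ by $(T_uf)(w)=\mathbb{E}\left[f\left(we^{-u}+\sigma(u)Z\right)\right]$, where $\sigma^2(u)=1-e^{-2u}$, is not strongly continuous on $(L,\|\cdot\|_L)$; that is, there exists $f\in L$ such that $\|T_uf-f\|_L$ does not converge to $0$ as $u\searrow 0$.
   Context: $D=D[0,1]$ denotes the space of all càdlàg functions $w:[0,1]\to\mathbb{R}$, and $\|\cdot\|$ denotes the supremum norm on $D$. $L$ is the set of all continuous functions $f:D\to\mathbb{R}$ such that $\sup_{w\in D}\frac{|f(w)|}{1+\|w\|^3}<\infty$, with norm $\|f\|_L=\sup_{w\in D}\frac{|f(w)|}{1+\|w\|^3}$. $Z$ denotes a standard Brownian motion on $[0,1]$, viewed as a random element of $D$. *)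

(* Defs.v *)
From HB Require Import structures.
From mathcomp Require Import all_boot all_order all_algebra.
From mathcomp Require Import all_classical all_reals all_analysis.
Set Implicit Arguments. Unset Strict Implicit. Unset Printing Implicit Defensive.
Import Order.TTheory GRing.Theory Num.Theory.
Import numFieldNormedType.Exports.
Local Open Scope classical_set_scope.
Local Open Scope ring_scope.

Section Defs.
Variable R : realType.

(* Elements of D[0,1] are represented as functions R -> R which are cadlag on
   [0,1] and extended constantly outside [0,1] (canonical representative). *)
Definition isD (w : R -> R) : Prop :=
  [/\ (forall t, 0 <= t < 1 -> w x @[x --> t^'+] --> w t),
      (forall t, 0 < t <= 1 -> exists l : R, w x @[x --> t^'-] --> l),
      (forall t, t < 0 -> w t = w 0) &
      (forall t, 1 < t -> w t = w 1)].

Definition supnorm (w : R -> R) : R := sup [set `|w t| | t in `[0, 1]].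

Definition inL (f : (R -> R) -> R) : Prop :=
  (forall w, isD w -> forall e : R, 0 < e -> exists2 d : R, 0 < d &
     forall v, isD v -> supnorm (v \- w) < d -> `|f v - f w| < e) /\
  (exists C : R, forall w, isD w -> `|f w| <= C * (1 + supnorm w ^+ 3)).

Definition normL (g : (R -> R) -> R) : \bar R :=
  ereal_sup [set (`|g w| / (1 + supnorm w ^+ 3))%:E | w in isD].

(* standard Brownian motion on [0,1] with continuous paths (extended
   constantly outside [0,1]); finite-dimensional law given through
   independent Gaussian increments *)
Definition isBM d (Omega : measurableType d) (P : probability Omega R)
  (Z : Omega -> R -> R) : Prop :=
  [/\ (forall t, measurable_fun setT (fun om => Z om t)),
      (forall om, Z om 0 = 0),
      (forall om, {within `[0, 1], continuous (Z om)}),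
      (forall om, (forall t, t < 0 -> Z om t = Z om 0) /\
                  (forall t, 1 < t -> Z om t = Z om 1)) &
      (forall (n : nat) (t : nat -> R) (A : nat -> set R),
         0 <= t 0 -> t n <= 1 -> (forall i, (i < n)%N -> t i < t i.+1) ->
         (forall i, measurable (A i)) ->
         P (\bigcap_(i in [set i | (i < n)%N])
              [set om | A i (Z om (t i.+1) - Z om (t i))]) =
         (\prod_(i < n) normal_prob 0 (Num.sqrt (t i.+1 - t i)) (A i))%E)].

Definition sigmaOU (u : R) : R := Num.sqrt (1 - expR (- (2 * u))).

Definition Tu d (Omega : measurableType d) (P : probability Omega R)
  (Z : Omega -> R -> R) (u : R) (f : (R -> R) -> R) : (R -> R) -> R :=
  fun w => fine ('E_P[fun om => f (fun t => (w t * expR (- u) + sigmaOU u * Z om t)%R)])%E.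

End Defs.

(* Main.v *)
Require Import Defs.
From HB Require Import structures.
From mathcomp Require Import all_boot all_order all_algebra.
From mathcomp Require Import all_classical all_reals all_analysis.
From mathcomp Require Import lra.
Import Order.TTheory GRing.Theory Num.Theory.
Import numFieldNormedType.Exports.
Local Open Scope classical_set_scope.
Local Open Scope ring_scope.

Lemma norm_tri (R : realType) (a b : R) : `|b| <= `|a| + `|a - b|.
Proof. by have := ler_normD a (b - a); rewrite addrC subrK distrC. Qed.
Arguments norm_tri {R}.

Lemma isD_bnd (R : realType) (g : R -> R) : isD g ->
  exists M, forall t, 0 <= t <= 1 -> `|g t| <= M.
Proof.
case=> gr gl glo ghi.
have loc x : 0 <= x <= 1 -> exists2 a : R, 0 < a &
    exists B : R, forall y, `|x - y| < a -> `|g y| <= B.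
  move=> /andP[x0 x1].
  have [ar ar0 [Br HBr]] : exists2 a : R, 0 < a &
      exists B : R, forall y, x < y -> `|x - y| < a -> `|g y| <= B.
    have [xl1|xg1] := ltP x 1.
      have := gr x; rewrite x0 xl1 => /(_ isT).
      move=> /cvgrPdist_lt/(_ 1 ltr01)[a /= a0 Ha].
      exists a => //; exists (`|g x| + 1) => y xy xya.
      have := Ha y xya xy => h.
      by rewrite (le_trans (norm_tri (g x) (g y))) // lerD2l ltW.
    have x1e : x = 1 by apply/eqP; rewrite eq_le x1 xg1.
    exists 1 => //; exists `|g 1| => y xy _.
    by rewrite ghi // -x1e.
  have [al al0 [Bl HBl]] : exists2 a : R, 0 < a &
      exists B : R, forall y, y < x -> `|x - y| < a -> `|g y| <= B.
    have [xg0|xl0] := ltP 0 x.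
      have := gl x; rewrite xg0 x1 => /(_ isT) [l Hl].
      move: Hl => /cvgrPdist_lt/(_ 1 ltr01)[a /= a0 Ha].
      exists a => //; exists (`|l| + 1) => y xy xya.
      have := Ha y xya xy => h.
      by rewrite (le_trans (norm_tri l (g y))) // lerD2l ltW.
    have x0e : x = 0 by apply/eqP; rewrite eq_le x0 xl0.
    exists 1 => //; exists `|g 0| => y xy _.
    by rewrite glo // -x0e.
  exists (Num.min ar al); first by rewrite lt_min ar0 al0.
  exists (Num.max (Num.max Br Bl) `|g x|) => y.
  rewrite lt_min => /andP[ya yb].
  case: (ltgtP x y) => [xy|yx|<-].
  - by rewrite !le_max HBr.
  - by rewrite !le_max HBl ?orbT.
  - by rewrite !le_max lexx !orbT.
have := (@segment_compact R 0 1); rewrite compact_near_coveringP.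
move=> /(_ R (pinfty_nbhs R) (fun M t => `|g t| <= M) _).
case.
- move=> x /=; rewrite in_itv /= => /loc [a a0 [B HB]].
  rewrite /prop_near2 /=. exists ((ball x a : set R), ([set M : R | B < M])); first split => /=.
  + by apply/nbhs_ballP; exists a.
  + by exists B; split => //; rewrite num_real.
  case=> y M [/= hy hM].
  apply: (le_trans (HB y _)) (ltW hM); by move: hy; rewrite -ball_normE.
- move=> M0 [_ HM]; exists (M0 + 1) => t t01.
  by apply: (HM (M0 + 1)); [rewrite ltrDl | rewrite /= in_itv].
Qed.

Lemma bnd_supnorm (R : realType) (g : R -> R) (M : R) :
  (forall t, 0 <= t <= 1 -> `|g t| <= M) ->
  forall t, 0 <= t <= 1 -> `|g t| <= supnorm g.
Proof.
move=> HM t t01; apply: sup_upper_bound.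
  split; first by exists `|g t|, t => //=; rewrite in_itv.
  by exists M => _ [s s01 <-]; apply: HM; move: s01; rewrite /= in_itv.
by exists t => //=; rewrite in_itv.
Qed.

Lemma supnorm_cst (R : realType) (c : R) : supnorm (fun _ : R => c) = `|c|.
Proof.
have H01 : 0 <= (0:R) <= 1 by apply/andP; split; [exact: lexx | exact: ler01].
apply/eqP; rewrite eq_le; apply/andP; split.
  apply: ge_sup; first by exists `|c|, 0 => //=; rewrite in_itv.
  by move=> _ [s _ <-].
exact: (@bnd_supnorm R (fun _ => c) `|c| (fun _ _ => lexx _) 0 H01).
Qed.

Lemma isD_cst (R : realType) (c : R) : isD (fun _ : R => c).
Proof.
split => //; first by move=> t _; exact: cvg_cst.
by move=> t _; exists c; exact: cvg_cst.
Qed.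

Arguments isD_bnd {R g}.
Arguments bnd_supnorm {R g M}.
Arguments supnorm_cst {R}.
Arguments isD_cst {R}.

Definition hfun (R : realType) (x : R) : R := x ^+ 3 * cos x.
Arguments hfun {R}.

Lemma cos2pin (R : realType) (n : nat) : cos ((pi *+ 2) *+ n) = 1 :> R.
Proof.
by elim: n => [|n IH]; [rewrite mulr0n cos0 | rewrite mulrSr cosD2pi].
Qed.

Theorem lemma1 (R : realType) (d : measure_display) (Omega : measurableType d)
  (P : probability Omega R) (Z : Omega -> R -> R) :
  isBM P Z ->
  exists f : (R -> R) -> R, inL f /\
    ~ ((normL (fun w => Tu P Z u f w - f w)) @[u --> 0^'+] --> 0%E).
Proof.
case=> _ Z0 _ _ _.
have hc : continuous (@hfun R).
  move=> x; apply: (@continuousM _ _ (fun y : R => y ^+ 3) cos); [exact: exprn_continuous | exact: continuous_cos].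
have H01 : 0 <= (0:R) <= 1 by apply/andP; split; [exact: lexx | exact: ler01].
exists (fun w => hfun (w 0)); split.
  split.
    move=> w wD e e0.
    have := hc (w 0) => /cvgrPdist_lt/(_ e e0)/nbhs_ballP [r /= r0 Hd].
    exists r => // v vD vw.
    have [Mv HMv] := isD_bnd vD; have [Mw HMw] := isD_bnd wD.
    have hle : `|(v \- w) 0| <= supnorm (v \- w).
      apply: (@bnd_supnorm R _ (Mv + Mw)) H01 => t t01 /=.
      exact: le_trans (ler_normB _ _) (lerD (HMv _ t01) (HMw _ t01)).
    rewrite distrC; apply: Hd.
    by rewrite -ball_normE /= distrC (le_lt_trans hle vw).
  exists 1 => w wD; rewrite mul1r.
  have [M HM] := isD_bnd wD.
  have hw := bnd_supnorm HM 0 H01.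
  rewrite /hfun normrM normrX.
  apply: le_trans (_ : `|w 0| ^+ 3 <= _).
    by rewrite ler_piMr ?exprn_ge0 // cos_max.
  apply: le_trans (_ : supnorm w ^+ 3 <= _); last by rewrite lerDr.
  by rewrite lerXn2r // ?nnegrE // (le_trans _ hw).

move=> /fine_cvgP [Hfin].
have h2 : (0:R) < 1/2 by rewrite divr_gt0 // ltr01.
move=> /cvgrPdist_lt /(_ (1/2) h2) Hc.
have [r /= r0 Hd] := filterI Hfin Hc.
have pi0 : (0:R) < pi by rewrite (lt_le_trans _ (pi_ge2 R)).
pose k := (Num.truncn (pi * (1 + r) / r / (pi *+ 2))).+1.
pose x : R := (pi *+ 2) *+ k.
have xgt : pi * (1 + r) / r < x.
  have := truncnS_gt (pi * (1 + r) / r / (pi *+ 2)).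
  rewrite -/k ltr_pdivrMr; last by rewrite mulr2n addr_gt0.
  by move=> H; rewrite /x; rewrite mulr_natl in H.
have xpi : pi < x.
  apply: lt_trans xgt; rewrite ltr_pdivlMr // mulrDr mulr1.
  lra.
have x0 : 0 < x by apply: lt_trans xpi.
have x1 : 1 <= x.
  by apply: le_trans (ltW xpi); apply: le_trans (pi_ge2 R); rewrite ler1n.
have xpi0 : 0 < x - pi by rewrite subr_gt0.
have cosx : cos x = 1 by rewrite /x cos2pin.
have cosxpi : cos (x - pi) = -1.
  by have := cosDpi (x - pi); rewrite subrK cosx => /eqP; rewrite eq_sym eqr_oppLR => /eqP <-.
pose y := x / (x - pi).
have y0 : 0 < y by rewrite divr_gt0.
have y1 : 1 < y by rewrite ltr_pdivlMr // mul1r ltrBlDr ltrDl.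
pose u := ln y.
have u0 : 0 < u by rewrite ln_gt0.
have ud : u < r.
  rewrite /u -[r in _ < r]expRK ltr_ln ?posrE ?expR_gt0 //.
  apply: lt_le_trans (expR_ge1Dx r).
  rewrite /y ltr_pdivrMr //.
  move: xgt; rewrite ltr_pdivrMr // => xgt.
  nra.
have ex : x * expR (- u) = x - pi.
  by rewrite expRN /u lnK ?posrE // /y invf_div mulrC divfK // gt_eqF.
have ub : ball (0:R) r u by rewrite -ball_normE /= sub0r normrN gtr0_norm.
have [ufin ulth] := Hd u ub u0.
pose w := fun _ : R => x.
have Tw : Tu P Z u (fun w => hfun (w 0)) w = hfun (x - pi).
  rewrite /Tu -[RHS]/(fine (hfun (x - pi))%:E) -(expectation_cst P).
  congr (fine (expectation _ _)); apply/funext => om /=.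
  by rewrite Z0 mulr0 addr0 /w ex.
pose F := fun w : R -> R => hfun (w 0).
pose G := fun w : R -> R => Tu P Z u F w - F w.
have key : ((`|G w| / (1 + supnorm w ^+ 3))%R%:E <= normL G)%E.
  by apply: ereal_sup_ubound; exists w => //; exact: isD_cst.
move: key; rewrite /G /F Tw supnorm_cst /w (gtr0_norm x0) /hfun cosx cosxpi.
have A0 : 0 <= (x - pi) ^+ 3 by rewrite exprn_ge0 // ltW.
have B1 : 1 <= x ^+ 3 by rewrite exprn_ege1.
rewrite mulrN1 mulr1 -opprD normrN ger0_norm; last by rewrite addr_ge0 // (le_trans ler01).
rewrite -(fineK ufin) lee_fin => key.
move: ulth; rewrite /= sub0r normrN => ulth.
have := le_lt_trans key (le_lt_trans (ler_norm _) ulth).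
rewrite ltr_pdivrMr; last by rewrite (lt_le_trans ltr01) // lerDl (le_trans ler01).
move: A0 B1; set A := (x - pi) ^+ 3; set B := x ^+ 3; lra.
Qed.
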